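(* Let $G$ be a connected graph with detour sequence $D: d_1,d_2,\ldots,d_n$. Then $\max_{2\le i\le n}\{d_i-d_{i-1}\} \le \left\lfloor \frac{\tau(G)}{2} \right\rfloor$.
   Context: All graphs are finite and simple. The order of a path is its number of vertices. For a vertex $v$ of $G$, $\tau(v)$ is the order of a longest path in $G$ having $v$ as an endvertex, and $\tau(G)$ is the order of a longest path in $G$. The detour sequence of $G$ is the nondecreasing sequence $d_1\le d_2\le\cdots\le d_n$ of the values $\tau(v)$, $v\in V(G)$, where $n=|V(G)|$. The quantity $\max_{2\le i\le n}\{d_i-d_{i-1}\}$ is called the maximum gap of $D$. *)

(* Defs.v *)
From mathcomp Require Import all_boot.
Set Implicit Arguments. Unset Strict Implicit. Unset Printing Implicit Defensive.

Definition simple_graph (T : finType) (e : rel T) : Prop :=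
  symmetric e /\ irreflexive e.

Definition connected_graph (T : finType) (e : rel T) : Prop :=
  forall x y : T, connect e x y.

(* A path of G with endvertex v: the vertex sequence v :: s, duplicate-free,
   consecutive vertices adjacent.  Its order is size (v :: s). *)
Definition gpath_from (T : finType) (e : rel T) (v : T) (s : seq T) : bool :=
  uniq (v :: s) && path e v s.

(* tau v : the order of a longest path in G having v as an endvertex.
   Every path has order <= #|T|, so the max ranges over k < #|T|.+1. *)
Definition tau (T : finType) (e : rel T) (v : T) : nat :=
  \max_(k < #|T|.+1 |
        [exists s : (k.-1).-tuple T, (0 < k) && gpath_from e v s]) k.

Definition tauG (T : finType) (e : rel T) : nat := \max_(v : T) tau e v.

Definition detour_seq (T : finType) (e : rel T) : seq nat :=
  sort leq [seq tau e v | v <- enum T].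

(* Maximum gap: max over 2 <= i <= n of d_i - d_{i-1}
   (0-indexed: max over 1 <= i < n of d`_i - d`_(i-1)). *)
Definition max_gap (d : seq nat) : nat :=
  \max_(1 <= i < size d) (nth 0 d i - nth 0 d i.-1).

(* Main.v *)
Require Import Defs.
From mathcomp Require Import all_boot.
From mathcomp Require Import zify.

Lemma ar1 a b : a <= b -> a + b.+1 <= 2 * b.+1. Proof. lia. Qed.
Lemma ar2 a b : b < a -> a + b.+1 <= 2 * a.+1. Proof. lia. Qed.

Section S.
Variables (T : finType) (e : rel T).

Lemma tau_ge v s : gpath_from e v s -> (size s).+1 <= tau e v.
Proof.
move=> H.
have Hs : (size s).+1 < #|T|.+1.
  case/andP: H => Hu _; rewrite ltnS; have := max_card (mem (v :: s)); by rewrite (card_uniqP Hu).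
apply: (@leq_bigmax_cond _ _ (fun k : 'I_#|T|.+1 => nat_of_ord k) (Ordinal Hs)).
apply/existsP; exists (in_tuple s) => /=; exact: H.
Qed.

Lemma tau_path v : exists s, gpath_from e v s /\ tau e v = (size s).+1.
Proof.
rewrite /tau.
have Hs : 1 < #|T|.+1 by rewrite ltnS; apply/card_gt0P; exists v.
pose P := (fun k : 'I_#|T|.+1 =>
   [exists s : (k.-1).-tuple T, (0 < k) && gpath_from e v s]).
have Pi0 : P (Ordinal Hs) by apply/existsP; exists [tuple].
rewrite (@bigmax_eq_arg _ (Ordinal Hs) P) //.
case: arg_maxnP => // i /existsP [s /andP [Hi Hp]] _.
exists s; split => //; rewrite size_tuple; by case: (nat_of_ord i) Hi.
Qed.

Lemma tau_le_G v : tau e v <= tauG e.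
Proof. exact: (@leq_bigmax _ (fun v => tau e v)). Qed.

Lemma tauG_path (v : T) : exists w s, gpath_from e w s /\ tauG e = (size s).+1.
Proof.
rewrite /tauG (bigmax_eq_arg v) //.
set w := [arg max_(i > v | true) tau e i].
have [s [Hs ->]] := tau_path w; by exists w, s.
Qed.

Hypothesis esym : symmetric e.

Lemma on_P (P : seq T) x : uniq P -> sorted e P -> x \in P ->
  exists r, [/\ gpath_from e x r, {subset r <= P} & size P <= 2 * (size r).+1].
Proof.
move=> HU HS Hx; case/splitPr: Hx HU HS => A B.
rewrite sorted_cat_cons => HU /andP [HA HB].
have HU' := HU; move: HU; rewrite cat_uniq => /and3P [UA _ UB].
have [hle|hle] := leqP (size A) (size B).
- exists B; split.
  + by rewrite /gpath_from UB HB.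
  + by move=> z zB; rewrite mem_cat inE zB !orbT.
  + rewrite size_cat /=; exact: ar1.
- exists (rev A); split.
  + rewrite /gpath_from -rev_rcons rev_uniq.
    have : uniq (rcons A x).
      move: HU'; rewrite -cat_rcons cat_uniq; by case/andP.
    move=> -> /=.
    have H2 : sorted (fun z => e^~ z) (rcons A x).
      move: HA; case: (rcons A x) => //= a l.
      by rewrite (@eq_path _ (fun z => e^~ z) e) // => ? ?; exact: esym.
    by rewrite -rev_sorted rev_rcons in H2.
  + by move=> z; rewrite mem_rev => zA; rewrite mem_cat zA.
  + rewrite size_cat size_rev /=; exact: ar2.
Qed.

Lemma walk (P : seq T) : uniq P -> sorted e P -> forall q x, path e x q ->
  uniq (x :: q) -> last x q \in P ->
  exists r, [/\ gpath_from e x r, {subset x :: r <= x :: q ++ P}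
            & size P <= 2 * (size r).+1].
Proof.
move=> HU HS; elim=> [|y q IH] x Hp Hu Hl.
- have [r [H1 H2 H3]] := on_P _ _ HU HS Hl.
  exists r; split => // z; rewrite inE => /orP [/eqP -> | /H2 zP];
    by rewrite inE ?eqxx // zP orbT.
- case xP: (x \in P).
  + have [r [H1 H2 H3]] := on_P _ _ HU HS xP.
    exists r; split => // z; rewrite inE => /orP [/eqP -> | /H2 zP].
      by rewrite inE eqxx.
    by rewrite inE mem_cat zP !orbT.
  + move: Hp Hu Hl => /= /andP [exy Hp] /andP [xn Hu] Hl.
    have [r [H1 H2 H3]] := IH y Hp Hu Hl.
    exists (y :: r); split.
    * rewrite /gpath_from /=; case/andP: H1 => /= /andP [yr ur] pr; rewrite yr ur pr exy !andbT /=.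
      apply/negP => xr; have := H2 x xr.
      by rewrite -cat_cons mem_cat xP orbF (negbTE xn).
    * move=> z; rewrite inE => /orP [/eqP -> | /H2 zP]; first by rewrite inE eqxx.
      by rewrite inE zP orbT.
    * by apply: leq_trans H3 _; rewrite leq_mul2l /= ltnW.
Qed.

Lemma tau_lower (v : T) : connected_graph e -> tauG e <= 2 * tau e v.
Proof.
move=> conn.
have [w [s [Hg ->]]] := tauG_path v.
case/andP: Hg => HU HS.
have /connectP [p Hp Hl] := conn v w.
case: (shortenP Hp) Hl => p' Hp' Hu' _ Hl'.
have wP : last v p' \in w :: s by rewrite -Hl' mem_head.
have [r [H1 _ H3]] := walk _ HU HS _ _ Hp' Hu' wP.
apply: leq_trans H3 _; rewrite leq_mul2l /=; exact: tau_ge.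
Qed.

End S.

Lemma ar3 a b L : a <= L -> L <= 2 * b -> a - b <= L./2.
Proof. lia. Qed.

Theorem corollary1p5 (T : finType) (e : rel T) :
  simple_graph e -> connected_graph e ->
  max_gap (detour_seq e) <= (tauG e)./2.
Proof.
move=> [esym _] conn.
have memd : forall x, x \in detour_seq e -> exists v, x = tau e v.
  move=> x; rewrite /detour_seq mem_sort => /mapP [v _ ->]; by exists v.
rewrite /max_gap; apply/bigmax_leqP_seq => i; rewrite mem_index_iota => /andP [h1 h2] _.
have /memd [v ->] := mem_nth 0 h2.
have /memd [u ->] : nth 0 (detour_seq e) i.-1 \in detour_seq e.
  by apply: mem_nth; apply: leq_ltn_trans h2; exact: leq_pred.
apply: ar3; [exact: tau_le_G | exact: tau_lower].
Qed.
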